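(* Let $\widetilde\nabla$ be a canonical snm-connection on $\mathbb R^3$ determined by the unit constant vector field $\mathsf C$. Then every cylindrical surface whose rulings are parallel to $\mathsf C$ has constant sectional curvature $K\equiv\tfrac12$ with respect to $\widetilde\nabla$.
   Context: Let $\langle\cdot,\cdot\rangle$ be the Euclidean metric on $\mathbb R^3$ and $\widetilde\nabla^0$ its Levi-Civita connection (the ordinary directional derivative). Given a smooth vector field $\mathsf C$ on $\mathbb R^3$, the semi-symmetric non-metric connection (snm-connection) determined by $\mathsf C$ is $\widetilde\nabla_XY=\widetilde\nabla^0_XY+\langle \mathsf C,Y\rangle X$. It is called canonical if $\mathsf C$ is a constant vector field with $|\mathsf C|=1$. Its curvature tensor is $\widetilde R(X,Y)Z=\widetilde\nabla_X\widetilde\nabla_YZ-\widetilde\nabla_Y\widetilde\nabla_XZ-\widetilde\nabla_{[X,Y]}Z$. For a surface $M$ immersed in $\mathbb R^3$, the induced connection is $\nabla_XY=(\widetilde\nabla_XY)^{\top}$ (tangential component), with curvature tensor $R$ defined by the same formula, and the sectional curvature of $M$ with respect to $\widetilde\nabla$ at $p$ is $K(p)=\frac12\big(\langle R(e_1,e_2)e_2,e_1\rangle+\langle R(e_2,e_1)e_1,e_2\rangle\big)$ for an orthonormal basis $\{e_1,e_2\}$ of $T_pM$. A cylindrical surface with rulings parallel to a unit vector $\vec w$ is a surface $\psi(s,t)=\gamma(s)+t\vec w$, $s\in I$, $t\in\mathbb R$, where $\gamma$ is a regular curve in a plane orthogonal to $\vec w$. *)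

(* Defs.v *)
From Stdlib Require Import Reals List.
From Coquelicot Require Import Coquelicot.
Open Scope R_scope.

Record V3 := mkV3 { vx : R; vy : R; vz : R }.

Definition vadd (u v : V3) : V3 := mkV3 (vx u + vx v) (vy u + vy v) (vz u + vz v).
Definition vscal (a : R) (v : V3) : V3 := mkV3 (a * vx v) (a * vy v) (a * vz v).
Definition vopp (v : V3) : V3 := vscal (-1) v.
Definition vdot (u v : V3) : R := vx u * vx v + vy u * vy v + vz u * vz v.
Definition vzero : V3 := mkV3 0 0 0.

Definition vderiv (g : R -> V3) (s : R) : V3 :=
  mkV3 (Derive (fun a => vx (g a)) s) (Derive (fun a => vy (g a)) s)
       (Derive (fun a => vz (g a)) s).

Definition ds (f : R -> R -> R) (s t : R) : R := Derive (fun a => f a t) s.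
Definition dt (f : R -> R -> R) (s t : R) : R := Derive (fun b => f s b) t.

Definition dsV (V : R -> R -> V3) (s t : R) : V3 :=
  mkV3 (ds (fun a b => vx (V a b)) s t) (ds (fun a b => vy (V a b)) s t)
       (ds (fun a b => vz (V a b)) s t).
Definition dtV (V : R -> R -> V3) (s t : R) : V3 :=
  mkV3 (dt (fun a b => vx (V a b)) s t) (dt (fun a b => vy (V a b)) s t)
       (dt (fun a b => vz (V a b)) s t).

Fixpoint dpart (l : list bool) (f : R -> R -> R) : R -> R -> R :=
  match l with
  | nil => f
  | b :: l' => if b then ds (dpart l' f) else dt (dpart l' f)
  end.

Definition smooth2 (U : R -> R -> Prop) (f : R -> R -> R) : Prop :=
  forall (l : list bool) (s t : R), U s t ->
    ex_derive (fun a => dpart l f a t) s /\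
    ex_derive (fun b => dpart l f s b) t /\
    continuous (fun p : R * R => dpart l f (fst p) (snd p)) (s, t).

Definition cyl (g : R -> V3) (w : V3) (s t : R) : V3 := vadd (g s) (vscal t w).

(** Tangent vector fields on the immersed surface psi, described by their
    coefficients in the coordinate frame (psi_s, psi_t):
    X = x1 psi_s + x2 psi_t. *)
Record TF := mkTF { tc1 : R -> R -> R; tc2 : R -> R -> R }.

Definition tfsub (x y : TF) : TF :=
  mkTF (fun s t => tc1 x s t - tc1 y s t) (fun s t => tc2 x s t - tc2 y s t).

Section Surface.
Variable psi : R -> R -> V3.

Definition psi_s := dsV psi.
Definition psi_t := dtV psi.

Definition tanf (x : TF) (s t : R) : V3 :=
  vadd (vscal (tc1 x s t) (psi_s s t)) (vscal (tc2 x s t) (psi_t s t)).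

Definition Dflat (x : TF) (V : R -> R -> V3) (s t : R) : V3 :=
  vadd (vscal (tc1 x s t) (dsV V s t)) (vscal (tc2 x s t) (dtV V s t)).

Definition snm (C : V3) (x : TF) (V : R -> R -> V3) (s t : R) : V3 :=
  vadd (Dflat x V s t) (vscal (vdot C (V s t)) (tanf x s t)).

(** Coefficients (w.r.t. psi_s, psi_t) of the tangential component of an
    ambient vector field v along psi (via the first fundamental form). *)
Definition tan_coef (v : R -> R -> V3) : TF :=
  let E s t := vdot (psi_s s t) (psi_s s t) in
  let F s t := vdot (psi_s s t) (psi_t s t) in
  let G s t := vdot (psi_t s t) (psi_t s t) in
  let a s t := vdot (v s t) (psi_s s t) in
  let b s t := vdot (v s t) (psi_t s t) in
  mkTF (fun s t => (G s t * a s t - F s t * b s t) / (E s t * G s t - F s t ^ 2))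
       (fun s t => (E s t * b s t - F s t * a s t) / (E s t * G s t - F s t ^ 2)).

Definition nabla (C : V3) (x y : TF) : TF := tan_coef (snm C x (tanf y)).

Definition bracket (x y : TF) : TF :=
  mkTF (fun s t => tc1 x s t * ds (tc1 y) s t + tc2 x s t * dt (tc1 y) s t
                   - (tc1 y s t * ds (tc1 x) s t + tc2 y s t * dt (tc1 x) s t))
       (fun s t => tc1 x s t * ds (tc2 y) s t + tc2 x s t * dt (tc2 y) s t
                   - (tc1 y s t * ds (tc2 x) s t + tc2 y s t * dt (tc2 x) s t)).

Definition curv (C : V3) (x y z : TF) : TF :=
  tfsub (tfsub (nabla C x (nabla C y z)) (nabla C y (nabla C x z)))
        (nabla C (bracket x y) z).

Definition sect_expr (C : V3) (e1 e2 : TF) (s t : R) : R :=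
  / 2 * (vdot (tanf (curv C e1 e2 e2) s t) (tanf e1 s t)
         + vdot (tanf (curv C e2 e1 e1) s t) (tanf e2 s t)).

End Surface.

Definition dom (lo hi : Rbar) (s t : R) : Prop := Rbar_lt lo s /\ Rbar_lt s hi.

(* Main.v *)
Require Import Defs.
From Stdlib Require Import Reals List Lra.
From Coquelicot Require Import Coquelicot.
Open Scope R_scope.

Lemma loc_I (lo hi : Rbar) (s : R) : Rbar_lt lo s -> Rbar_lt s hi ->
  locally s (fun a => Rbar_lt lo a /\ Rbar_lt a hi).
Proof.
  intros H1 H2. apply filter_and.
  - apply (open_Rbar_gt lo s H1).
  - apply (open_Rbar_lt hi s H2).
Qed.

Lemma V3_eq (u v : V3) : vx u = vx v -> vy u = vy v -> vz u = vz v -> u = v.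
Proof. destruct u, v; simpl; intros; subst; reflexivity. Qed.

Lemma vdot_addl u v z : vdot (vadd u v) z = vdot u z + vdot v z.
Proof. unfold vdot, vadd; simpl; ring. Qed.
Lemma vdot_scall k u z : vdot (vscal k u) z = k * vdot u z.
Proof. unfold vdot, vscal; simpl; ring. Qed.
Lemma vdot_addr u v z : vdot z (vadd u v) = vdot z u + vdot z v.
Proof. unfold vdot, vadd; simpl; ring. Qed.
Lemma vdot_scalr k u z : vdot z (vscal k u) = k * vdot z u.
Proof. unfold vdot, vscal; simpl; ring. Qed.
Lemma vdot_comm u v : vdot u v = vdot v u.
Proof. unfold vdot; ring. Qed.

Lemma ds_form (X1 X2 P Q Y Z : R -> R -> R) (h : R -> R) (e s t : R) :
  ex_derive (fun a => X1 a t) s -> ex_derive (fun a => X2 a t) s ->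
  ex_derive (fun a => P a t) s -> ex_derive (fun a => Q a t) s ->
  ex_derive (fun a => Y a t) s -> ex_derive (fun a => Z a t) s -> ex_derive h s ->
  ds (fun a b => X1 a b * P a b + X2 a b * Q a b + X1 a b * Y a b * h a + e * Z a b * X1 a b) s t
  = ds X1 s t * P s t + X1 s t * ds P s t + (ds X2 s t * Q s t + X2 s t * ds Q s t)
    + (ds X1 s t * Y s t * h s + X1 s t * ds Y s t * h s + X1 s t * Y s t * Derive (fun a => h a) s)
    + e * (ds Z s t * X1 s t + Z s t * ds X1 s t).
Proof.
  intros. unfold ds. apply is_derive_unique. auto_derive.
  - repeat split; assumption.
  - ring.
Qed.

Lemma ds_form2 (X1 X2 P Q Z : R -> R -> R) (e s t : R) :
  ex_derive (fun a => X1 a t) s -> ex_derive (fun a => X2 a t) s ->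
  ex_derive (fun a => P a t) s -> ex_derive (fun a => Q a t) s ->
  ex_derive (fun a => Z a t) s ->
  ds (fun a b => X1 a b * P a b + X2 a b * Q a b + e * Z a b * X2 a b) s t
  = ds X1 s t * P s t + X1 s t * ds P s t + (ds X2 s t * Q s t + X2 s t * ds Q s t)
    + e * (ds Z s t * X2 s t + Z s t * ds X2 s t).
Proof.
  intros. unfold ds. apply is_derive_unique. auto_derive.
  - repeat split; assumption.
  - ring.
Qed.

Lemma dt_form (X1 X2 P Q Y Z : R -> R -> R) (h : R -> R) (e s t : R) :
  ex_derive (fun b => X1 s b) t -> ex_derive (fun b => X2 s b) t ->
  ex_derive (fun b => P s b) t -> ex_derive (fun b => Q s b) t ->
  ex_derive (fun b => Y s b) t -> ex_derive (fun b => Z s b) t ->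
  dt (fun a b => X1 a b * P a b + X2 a b * Q a b + X1 a b * Y a b * h a + e * Z a b * X1 a b) s t
  = dt X1 s t * P s t + X1 s t * dt P s t + (dt X2 s t * Q s t + X2 s t * dt Q s t)
    + (dt X1 s t * Y s t * h s + X1 s t * dt Y s t * h s)
    + e * (dt Z s t * X1 s t + Z s t * dt X1 s t).
Proof.
  intros. unfold dt. apply is_derive_unique. auto_derive.
  - repeat split; assumption.
  - ring.
Qed.

Lemma dt_form2 (X1 X2 P Q Z : R -> R -> R) (e s t : R) :
  ex_derive (fun b => X1 s b) t -> ex_derive (fun b => X2 s b) t ->
  ex_derive (fun b => P s b) t -> ex_derive (fun b => Q s b) t ->
  ex_derive (fun b => Z s b) t ->
  dt (fun a b => X1 a b * P a b + X2 a b * Q a b + e * Z a b * X2 a b) s t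
  = dt X1 s t * P s t + X1 s t * dt P s t + (dt X2 s t * Q s t + X2 s t * dt Q s t)
    + e * (dt Z s t * X2 s t + Z s t * dt X2 s t).
Proof.
  intros. unfold dt. apply is_derive_unique. auto_derive.
  - repeat split; assumption.
  - ring.
Qed.

Lemma exform_s (X1 X2 P Q Y Z : R -> R -> R) (h : R -> R) (e s t : R) :
  ex_derive (fun a => X1 a t) s -> ex_derive (fun a => X2 a t) s ->
  ex_derive (fun a => P a t) s -> ex_derive (fun a => Q a t) s ->
  ex_derive (fun a => Y a t) s -> ex_derive (fun a => Z a t) s -> ex_derive h s ->
  ex_derive (fun a => X1 a t * P a t + X2 a t * Q a t + X1 a t * Y a t * h a + e * Z a t * X1 a t) s.
Proof. intros. auto_derive. repeat split; assumption. Qed.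
Lemma exform2_s (X1 X2 P Q Z : R -> R -> R) (e s t : R) :
  ex_derive (fun a => X1 a t) s -> ex_derive (fun a => X2 a t) s ->
  ex_derive (fun a => P a t) s -> ex_derive (fun a => Q a t) s ->
  ex_derive (fun a => Z a t) s ->
  ex_derive (fun a => X1 a t * P a t + X2 a t * Q a t + e * Z a t * X2 a t) s.
Proof. intros. auto_derive. repeat split; assumption. Qed.
Lemma exform_t (X1 X2 P Q Y Z : R -> R -> R) (h : R -> R) (e s t : R) :
  ex_derive (fun b => X1 s b) t -> ex_derive (fun b => X2 s b) t ->
  ex_derive (fun b => P s b) t -> ex_derive (fun b => Q s b) t ->
  ex_derive (fun b => Y s b) t -> ex_derive (fun b => Z s b) t ->
  ex_derive (fun b => X1 s b * P s b + X2 s b * Q s b + X1 s b * Y s b * h s + e * Z s b * X1 s b) t.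
Proof. intros. auto_derive. repeat split; assumption. Qed.
Lemma exform2_t (X1 X2 P Q Z : R -> R -> R) (e s t : R) :
  ex_derive (fun b => X1 s b) t -> ex_derive (fun b => X2 s b) t ->
  ex_derive (fun b => P s b) t -> ex_derive (fun b => Q s b) t ->
  ex_derive (fun b => Z s b) t ->
  ex_derive (fun b => X1 s b * P s b + X2 s b * Q s b + e * Z s b * X2 s b) t.
Proof. intros. auto_derive. repeat split; assumption. Qed.

Lemma gen3 (u1 u2 u3 : R -> R) (k1 k2 k3 s : R) :
  ex_derive u1 s -> ex_derive u2 s -> ex_derive u3 s ->
  is_derive (fun a => u1 a * k1 + u2 a * k2 + u3 a * k3) s
    (Derive (fun a => u1 a) s * k1 + Derive (fun a => u2 a) s * k2 + Derive (fun a => u3 a) s * k3).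
Proof. intros. auto_derive. repeat split; assumption. ring. Qed.

Lemma ex3 (u1 u2 u3 v1 v2 v3 : R -> R) (s : R) :
  ex_derive u1 s -> ex_derive u2 s -> ex_derive u3 s ->
  ex_derive v1 s -> ex_derive v2 s -> ex_derive v3 s ->
  ex_derive (fun a => u1 a * v1 a + u2 a * v2 a + u3 a * v3 a) s.
Proof. intros. auto_derive. repeat split; assumption. Qed.

Lemma genc (u : R -> R) (c s : R) : ex_derive u s ->
  Derive (fun a => u a + c) s = Derive (fun a => u a) s.
Proof. intros. apply is_derive_unique. auto_derive. repeat split; assumption. ring. Qed.

Lemma genlin (c k b : R) : Derive (fun b0 => c + b0 * k) b = k.
Proof. apply is_derive_unique. auto_derive. easy. ring. Qed.

Lemma genprod (y1 y2 u : R -> R) (k s : R) :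
  ex_derive y1 s -> ex_derive y2 s -> ex_derive u s ->
  Derive (fun a => y1 a * u a + y2 a * k) s =
  Derive (fun a => y1 a) s * u s + y1 s * Derive (fun a => u a) s + Derive (fun a => y2 a) s * k.
Proof. intros. apply is_derive_unique. auto_derive. repeat split; assumption. ring. Qed.

Lemma genprodc (y1 y2 : R -> R) (u k s : R) :
  ex_derive y1 s -> ex_derive y2 s ->
  Derive (fun a => y1 a * u + y2 a * k) s =
  Derive (fun a => y1 a) s * u + Derive (fun a => y2 a) s * k.
Proof. intros. apply is_derive_unique. auto_derive. repeat split; assumption. ring. Qed.

Section Geo.
Variables (C : V3) (lo hi : Rbar) (g : R -> V3) (w : V3).
Hypothesis HC : vdot C C = 1.
Hypothesis Hw : w = C \/ w = vopp C.
Hypothesis Hg_smooth : forall (n : nat) (s : R), Rbar_lt lo s -> Rbar_lt s hi ->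
      ex_derive_n (fun a => vx (g a)) n s /\
      ex_derive_n (fun a => vy (g a)) n s /\
      ex_derive_n (fun a => vz (g a)) n s.
Hypothesis Hg_reg : forall s : R, Rbar_lt lo s -> Rbar_lt s hi -> vderiv g s <> vzero.
Hypothesis Hg_plane : exists c : R, forall s : R, Rbar_lt lo s -> Rbar_lt s hi ->
      vdot (g s) w = c.

Definition II (a : R) := Rbar_lt lo a /\ Rbar_lt a hi.
Definition T a := vderiv g a.
Definition T2 a := vderiv T a.
Definition EE a := vdot (T a) (T a).
Definition hh a := vdot (T2 a) (T a) / EE a.
Definition eps := vdot C w.
Definition PP := cyl g w.

Lemma exg a : II a -> ex_derive (fun a => vx (g a)) a /\ ex_derive (fun a => vy (g a)) a
  /\ ex_derive (fun a => vz (g a)) a.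
Proof. intros [H1 H2]. destruct (Hg_smooth 1 a H1 H2) as [A [B D]]. exact (conj A (conj B D)). Qed.

Lemma exT a : II a -> ex_derive (fun a => vx (T a)) a /\ ex_derive (fun a => vy (T a)) a
  /\ ex_derive (fun a => vz (T a)) a.
Proof. intros [H1 H2]. destruct (Hg_smooth 2 a H1 H2) as [A [B D]]. exact (conj A (conj B D)). Qed.

Lemma exT2 a : II a -> ex_derive (fun a => vx (T2 a)) a /\ ex_derive (fun a => vy (T2 a)) a
  /\ ex_derive (fun a => vz (T2 a)) a.
Proof. intros [H1 H2]. destruct (Hg_smooth 3 a H1 H2) as [A [B D]]. exact (conj A (conj B D)). Qed.

Lemma locII a : II a -> locally a II.
Proof. intros [H1 H2]. exact (loc_I lo hi a H1 H2). Qed.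

Lemma EE_nz a : II a -> EE a <> 0.
Proof.
  intros Ha HE. destruct Ha as [H1 H2]. apply (Hg_reg a H1 H2).
  unfold EE, vdot, T in HE.
  set (p := vderiv g a) in *. 
  assert (vx p = 0) by nra. assert (vy p = 0) by nra. assert (vz p = 0) by nra.
  apply V3_eq; simpl; assumption.
Qed.

Lemma Tw a : II a -> vdot (T a) w = 0.
Proof.
  intros Ha. destruct Hg_plane as [c Hc].
  destruct (exg a Ha) as [A [B D]].
  assert (H := gen3 (fun a => vx (g a)) (fun a => vy (g a)) (fun a => vz (g a)) (vx w) (vy w) (vz w) a A B D).
  assert (H' : is_derive (fun a => vdot (g a) w) a (vdot (T a) w)) by exact H.
  assert (H0 : is_derive (fun a => vdot (g a) w) a 0).
  { apply is_derive_ext_loc with (f := fun _ => c).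
    - apply filter_imp with (2 := locII a Ha). intros b [Hb1 Hb2]. symmetry. apply Hc; assumption.
    - auto_derive; [easy | ring]. }
  rewrite <- (is_derive_unique _ _ _ H'). exact (is_derive_unique _ _ _ H0).
Qed.

Lemma T2w a : II a -> vdot (T2 a) w = 0.
Proof.
  intros Ha.
  destruct (exT a Ha) as [A [B D]].
  assert (H := gen3 (fun a => vx (T a)) (fun a => vy (T a)) (fun a => vz (T a)) (vx w) (vy w) (vz w) a A B D).
  assert (H' : is_derive (fun a => vdot (T a) w) a (vdot (T2 a) w)) by exact H.
  assert (H0 : is_derive (fun a => vdot (T a) w) a 0).
  { apply is_derive_ext_loc with (f := fun _ => 0).
    - apply filter_imp with (2 := locII a Ha). intros b Hb. symmetry. apply Tw; assumption.
    - auto_derive; [easy | ring]. }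
  rewrite <- (is_derive_unique _ _ _ H'). exact (is_derive_unique _ _ _ H0).
Qed.

Lemma C_eq : C = vscal eps w.
Proof.
  unfold eps. destruct Hw as [-> | ->].
  - rewrite HC. apply V3_eq; simpl; ring.
  - replace (vdot C (vopp C)) with (- vdot C C) by (unfold vdot, vopp, vscal; simpl; ring).
    rewrite HC. apply V3_eq; simpl; ring.
Qed.

Lemma ww : vdot w w = 1.
Proof. destruct Hw as [-> | ->]; auto. rewrite <- HC. unfold vdot, vopp, vscal; simpl; ring. Qed.

Lemma eps2 : eps * eps = 1.
Proof.
  unfold eps. destruct Hw as [-> | ->]. rewrite HC; ring.
  replace (vdot C (vopp C)) with (- vdot C C) by (unfold vdot, vopp, vscal; simpl; ring).
  rewrite HC; ring.
Qed.

Lemma CT a : II a -> vdot C (T a) = 0.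
Proof. intros. rewrite C_eq, vdot_scall, vdot_comm, Tw; auto; ring. Qed.
Lemma Cw : vdot C w = eps.
Proof. reflexivity. Qed.

Lemma ex_hh a : II a -> ex_derive hh a.
Proof.
  intros Ha. unfold hh.
  destruct (exT a Ha) as [A [B D]]. destruct (exT2 a Ha) as [A2 [B2 D2]].
  apply (ex_derive_div (fun a => vdot (T2 a) (T a)) EE).
  - exact (ex3 _ _ _ _ _ _ a A2 B2 D2 A B D).
  - exact (ex3 _ _ _ _ _ _ a A B D A B D).
  - apply EE_nz; auto.
Qed.

Lemma psi_s_eq a b : II a -> psi_s PP a b = T a.
Proof.
  intros Ha. destruct (exg a Ha) as [A [B D]].
  unfold psi_s, dsV, ds, PP, cyl. apply V3_eq; simpl.
  - exact (genc _ _ a A).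
  - exact (genc _ _ a B).
  - exact (genc _ _ a D).
Qed.

Lemma psi_t_eq a b : psi_t PP a b = w.
Proof.
  unfold psi_t, dtV, dt, PP, cyl. apply V3_eq; simpl; apply genlin.
Qed.


Lemma ds_tanf_comp (proj : V3 -> R)
  (Hadd : forall u v, proj (vadd u v) = proj u + proj v)
  (Hsc : forall k u, proj (vscal k u) = k * proj u) y (s t : R) :
  II s -> ex_derive (fun a => tc1 y a t) s -> ex_derive (fun a => tc2 y a t) s ->
  ex_derive (fun a => proj (T a)) s ->
  Derive (fun a => proj (tanf PP y a t)) s =
  ds (tc1 y) s t * proj (T s) + tc1 y s t * Derive (fun a => proj (T a)) s + ds (tc2 y) s t * proj w.
Proof.
  intros Hs H1 H2 H3.
  rewrite (Derive_ext_loc _ (fun a => tc1 y a t * proj (T a) + tc2 y a t * proj w)).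
  - apply (genprod (fun a => tc1 y a t) (fun a => tc2 y a t) (fun a => proj (T a))); auto.
  - apply filter_imp with (2 := locII s Hs). intros a Ha. unfold tanf.
    rewrite psi_s_eq, psi_t_eq by auto. rewrite Hadd, !Hsc. reflexivity.
Qed.

Lemma dt_tanf_comp (proj : V3 -> R)
  (Hadd : forall u v, proj (vadd u v) = proj u + proj v)
  (Hsc : forall k u, proj (vscal k u) = k * proj u) y (s t : R) :
  II s -> ex_derive (fun b => tc1 y s b) t -> ex_derive (fun b => tc2 y s b) t ->
  Derive (fun b => proj (tanf PP y s b)) t =
  dt (tc1 y) s t * proj (T s) + dt (tc2 y) s t * proj w.
Proof.
  intros Hs H1 H2.
  rewrite (Derive_ext _ (fun b => tc1 y s b * proj (T s) + tc2 y s b * proj w)).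
  - apply (genprodc (fun b => tc1 y s b) (fun b => tc2 y s b)); auto.
  - intros b. unfold tanf.
    rewrite psi_s_eq, psi_t_eq by auto. rewrite Hadd, !Hsc. reflexivity.
Qed.

Lemma dsV_tanf y (s t : R) :
  II s -> ex_derive (fun a => tc1 y a t) s -> ex_derive (fun a => tc2 y a t) s ->
  dsV (tanf PP y) s t =
  vadd (vadd (vscal (ds (tc1 y) s t) (T s)) (vscal (tc1 y s t) (T2 s))) (vscal (ds (tc2 y) s t) w).
Proof.
  intros Hs H1 H2. destruct (exT s Hs) as [A [B D]].
  apply V3_eq; cbn [dsV vx vy vz vadd vscal]; unfold ds at 1.
  - apply (ds_tanf_comp vx); auto.
  - apply (ds_tanf_comp vy); auto.
  - apply (ds_tanf_comp vz); auto.
Qed.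

Lemma dtV_tanf y (s t : R) :
  II s -> ex_derive (fun b => tc1 y s b) t -> ex_derive (fun b => tc2 y s b) t ->
  dtV (tanf PP y) s t = vadd (vscal (dt (tc1 y) s t) (T s)) (vscal (dt (tc2 y) s t) w).
Proof.
  intros Hs H1 H2.
  apply V3_eq; cbn [dtV vx vy vz vadd vscal]; unfold dt at 1.
  - apply (dt_tanf_comp vx); auto.
  - apply (dt_tanf_comp vy); auto.
  - apply (dt_tanf_comp vz); auto.
Qed.


Lemma T2T a : II a -> vdot (T2 a) (T a) = EE a * hh a.
Proof. intros Ha. unfold hh. field. apply EE_nz; auto. Qed.
Lemma wT a : II a -> vdot w (T a) = 0.
Proof. intros. rewrite vdot_comm; apply Tw; auto. Qed.

Definition N1 (x y : TF) := fun a b => tc1 x a b * ds (tc1 y) a b + tc2 x a b * dt (tc1 y) a b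
  + tc1 x a b * tc1 y a b * hh a + eps * tc2 y a b * tc1 x a b.
Definition N2 (x y : TF) := fun a b => tc1 x a b * ds (tc2 y) a b + tc2 x a b * dt (tc2 y) a b
  + eps * tc2 y a b * tc2 x a b.

Ltac dots s :=
  repeat rewrite ?vdot_addl, ?vdot_addr, ?vdot_scall, ?vdot_scalr;
  rewrite ?(T2T s), ?(wT s), ?(Tw s), ?(T2w s), ?(CT s), ?Cw, ?ww by auto;
  fold (EE s).

Lemma nabla_eq x y (s t : R) :
  II s -> ex_derive (fun a => tc1 y a t) s -> ex_derive (fun a => tc2 y a t) s ->
  ex_derive (fun b => tc1 y s b) t -> ex_derive (fun b => tc2 y s b) t ->
  tc1 (nabla PP C x y) s t = N1 x y s t /\ tc2 (nabla PP C x y) s t = N2 x y s t.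
Proof.
  intros Hs H1 H2 H3 H4.
  unfold nabla, tan_coef; cbn [tc1 tc2].
  rewrite !(psi_s_eq s t), !psi_t_eq by auto.
  unfold snm, Dflat. rewrite dsV_tanf, dtV_tanf by auto.
  unfold tanf. rewrite !(psi_s_eq s t), !psi_t_eq by auto.
  dots s.
  assert (HE := EE_nz s Hs).
  unfold N1, N2; split; field; auto.
Qed.


Section Sm.
Variable f : R -> R -> R.
Hypothesis Hf : smooth2 (dom lo hi) f.
Lemma sm_s0 s t : II s -> ex_derive (fun a => f a t) s.
Proof. intros Hs. exact (proj1 (Hf nil s t Hs)). Qed.
Lemma sm_s1 s t : II s -> ex_derive (fun a => ds f a t) s.
Proof. intros Hs. exact (proj1 (Hf (true :: nil) s t Hs)). Qed.
Lemma sm_s2 s t : II s -> ex_derive (fun a => dt f a t) s.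
Proof. intros Hs. exact (proj1 (Hf (false :: nil) s t Hs)). Qed.
Lemma sm_t0 s t : II s -> ex_derive (fun b => f s b) t.
Proof. intros Hs. exact (proj1 (proj2 (Hf nil s t Hs))). Qed.
Lemma sm_t1 s t : II s -> ex_derive (fun b => ds f s b) t.
Proof. intros Hs. exact (proj1 (proj2 (Hf (true :: nil) s t Hs))). Qed.
Lemma sm_t2 s t : II s -> ex_derive (fun b => dt f s b) t.
Proof. intros Hs. exact (proj1 (proj2 (Hf (false :: nil) s t Hs))). Qed.
End Sm.

Ltac smt := match goal with
  | |- ex_derive hh _ => apply ex_hh; assumption
  | |- ex_derive (fun a => ds ?f a ?t) ?s => apply sm_s1; [assumption|assumption]
  | |- ex_derive (fun a => dt ?f a ?t) ?s => apply sm_s2; [assumption|assumption]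
  | |- ex_derive (fun b => ds ?f ?s b) ?t => apply sm_t1; [assumption|assumption]
  | |- ex_derive (fun b => dt ?f ?s b) ?t => apply sm_t2; [assumption|assumption]
  | |- ex_derive (fun a => ?f a ?t) ?s => apply sm_s0; [assumption|assumption]
  | |- ex_derive (fun b => ?f ?s b) ?t => apply sm_t0; [assumption|assumption]
  end.

Definition good (x : TF) := smooth2 (dom lo hi) (tc1 x) /\ smooth2 (dom lo hi) (tc2 x).

Lemma nabla_pt x z a b : good z -> II a ->
  tc1 (nabla PP C x z) a b = N1 x z a b /\ tc2 (nabla PP C x z) a b = N2 x z a b.
Proof. intros [Hz1 Hz2] Ha. apply nabla_eq; auto; smt. Qed.

Lemma N_ex y z s t : good y -> good z -> II s ->
  ex_derive (fun a => N1 y z a t) s /\ ex_derive (fun a => N2 y z a t) s /\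
  ex_derive (fun b => N1 y z s b) t /\ ex_derive (fun b => N2 y z s b) t.
Proof.
  intros [Hy1 Hy2] [Hz1 Hz2] Hs. unfold N1, N2. repeat split.
  - apply exform_s; smt.
  - apply exform2_s; smt.
  - apply exform_t; smt.
  - apply exform2_t; smt.
Qed.

Lemma nablaW x y z s t : good y -> good z -> II s ->
  tc1 (nabla PP C x (nabla PP C y z)) s t = tc1 x s t * ds (N1 y z) s t + tc2 x s t * dt (N1 y z) s t
     + tc1 x s t * N1 y z s t * hh s + eps * N2 y z s t * tc1 x s t /\
  tc2 (nabla PP C x (nabla PP C y z)) s t = tc1 x s t * ds (N2 y z) s t + tc2 x s t * dt (N2 y z) s t
     + eps * N2 y z s t * tc2 x s t.
Proof.
  intros Hy Hz Hs.
  destruct (N_ex y z s t Hy Hz Hs) as [A1 [A2 [A3 A4]]].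
  assert (L1 : locally s (fun a => N1 y z a t = tc1 (nabla PP C y z) a t)).
  { apply filter_imp with (2 := locII s Hs). intros a Ha. symmetry. apply (nabla_pt y z a t Hz Ha). }
  assert (L2 : locally s (fun a => N2 y z a t = tc2 (nabla PP C y z) a t)).
  { apply filter_imp with (2 := locII s Hs). intros a Ha. symmetry. apply (nabla_pt y z a t Hz Ha). }
  assert (G1 : forall b, N1 y z s b = tc1 (nabla PP C y z) s b).
  { intros b. symmetry. apply (nabla_pt y z s b Hz Hs). }
  assert (G2 : forall b, N2 y z s b = tc2 (nabla PP C y z) s b).
  { intros b. symmetry. apply (nabla_pt y z s b Hz Hs). }
  destruct (nabla_eq x (nabla PP C y z) s t Hs) as [E1 E2].
  - exact (ex_derive_ext_loc _ _ _ L1 A1).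
  - exact (ex_derive_ext_loc _ _ _ L2 A2).
  - exact (ex_derive_ext _ _ _ G1 A3).
  - exact (ex_derive_ext _ _ _ G2 A4).
  - rewrite E1, E2.
    assert (D1 : ds (tc1 (nabla PP C y z)) s t = ds (N1 y z) s t).
    { unfold ds; symmetry; apply Derive_ext_loc; exact L1. }
    assert (D2 : ds (tc2 (nabla PP C y z)) s t = ds (N2 y z) s t).
    { unfold ds; symmetry; apply Derive_ext_loc; exact L2. }
    assert (D3 : dt (tc1 (nabla PP C y z)) s t = dt (N1 y z) s t).
    { unfold dt; symmetry; apply Derive_ext; exact G1. }
    assert (D4 : dt (tc2 (nabla PP C y z)) s t = dt (N2 y z) s t).
    { unfold dt; symmetry; apply Derive_ext; exact G2. }
    set (n1 := N1 y z) in *. set (n2 := N2 y z) in *. unfold N1, N2.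
    rewrite D1, D2, D3, D4.
    rewrite <- (G1 t), <- (G2 t). split; reflexivity.
Qed.


Lemma schwarz_f f s t : smooth2 (dom lo hi) f -> II s -> ds (dt f) s t = dt (ds f) s t.
Proof.
  intros Hf Hs. unfold ds at 1. unfold dt at 1.
  apply Schwarz.
  - destruct (locII s Hs) as [e He]. exists e. intros u v Hu Hv.
    assert (Hu' : II u) by (apply He; exact Hu).
    repeat split.
    + exact (sm_s0 f Hf u v Hu').
    + exact (sm_t0 f Hf u v Hu').
    + exact (sm_s2 f Hf u v Hu').
    + exact (sm_t1 f Hf u v Hu').
  - apply continuity_2d_pt_filterlim. exact (proj2 (proj2 (Hf (true :: false :: nil) s t Hs))).
  - apply continuity_2d_pt_filterlim. exact (proj2 (proj2 (Hf (false :: true :: nil) s t Hs))).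
Qed.


Lemma curv_eq x y z s t : good x -> good y -> good z -> II s ->
  tc1 (curv PP C x y z) s t = eps * eps * (tc1 x s t * tc2 y s t - tc2 x s t * tc1 y s t) * tc2 z s t
  /\ tc2 (curv PP C x y z) s t = 0.
Proof.
  intros Hx Hy Hz Hs.
  destruct (nablaW x y z s t Hy Hz Hs) as [A1 A2].
  destruct (nablaW y x z s t Hx Hz Hs) as [B1 B2].
  destruct (nabla_pt (bracket x y) z s t Hz Hs) as [C1 C2].
  destruct Hx as [Hx1 Hx2]; destruct Hy as [Hy1 Hy2]; destruct Hz as [Hz1 Hz2].
  unfold curv. cbn [tfsub tc1 tc2].
  rewrite A1, A2, B1, B2, C1, C2.
  unfold N1, N2.
  rewrite !ds_form by smt. rewrite !ds_form2 by smt.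
  rewrite !dt_form by smt. rewrite !dt_form2 by smt.
  cbn [bracket tc1 tc2].
  rewrite !(schwarz_f (tc1 z)), !(schwarz_f (tc2 z)) by auto.
  split; ring.
Qed.


Lemma sect_main e1 e2 s t : good e1 -> good e2 -> II s ->
  vdot (tanf PP e1 s t) (tanf PP e1 s t) = 1 ->
  vdot (tanf PP e2 s t) (tanf PP e2 s t) = 1 ->
  vdot (tanf PP e1 s t) (tanf PP e2 s t) = 0 ->
  sect_expr PP C e1 e2 s t = / 2.
Proof.
  intros G1 G2 Hs H1 H2 H3.
  destruct (curv_eq e1 e2 e2 s t G1 G2 G2 Hs) as [K1 K2].
  destruct (curv_eq e2 e1 e1 s t G2 G1 G1 Hs) as [L1 L2].
  unfold sect_expr, tanf in *.
  rewrite !(psi_s_eq s t), !psi_t_eq in * by auto.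
  rewrite K1, K2, L1, L2.
  repeat rewrite ?vdot_addl, ?vdot_addr, ?vdot_scall, ?vdot_scalr in *.
  rewrite ?(T2T s), ?(wT s), ?(Tw s), ?(T2w s), ?(CT s), ?Cw, ?ww in * by auto.
  fold (EE s) in *.
  set (a1 := tc1 e1 s t) in *. set (a2 := tc2 e1 s t) in *.
  set (b1 := tc1 e2 s t) in *. set (b2 := tc2 e2 s t) in *.
  set (E := EE s) in *.
  match type of H1 with ?A = 1 => match type of H2 with ?B = 1 => match type of H3 with ?D = 0 =>
    assert (KEY : E * (a1 * b2 - a2 * b1) ^ 2 = A * B - D * D) by ring;
    rewrite H1, H2, H3 in KEY end end end.
  transitivity (/ 2 * (eps * eps) * (E * (a1 * b2 - a2 * b1) ^ 2)).
  - ring.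
  - rewrite eps2, KEY. ring.
Qed.

End Geo.


Theorem corollary3p2
  (C : V3) (HC : vdot C C = 1)
  (lo hi : Rbar) (Hlohi : Rbar_lt lo hi)
  (g : R -> V3) (w : V3) (Hw : w = C \/ w = vopp C)
  (Hg_smooth : forall (n : nat) (s : R), Rbar_lt lo s -> Rbar_lt s hi ->
      ex_derive_n (fun a => vx (g a)) n s /\
      ex_derive_n (fun a => vy (g a)) n s /\
      ex_derive_n (fun a => vz (g a)) n s)
  (Hg_reg : forall s : R, Rbar_lt lo s -> Rbar_lt s hi -> vderiv g s <> vzero)
  (Hg_plane : exists c : R, forall s : R, Rbar_lt lo s -> Rbar_lt s hi ->
      vdot (g s) w = c) :
  forall e1 e2 : TF,
    smooth2 (dom lo hi) (tc1 e1) -> smooth2 (dom lo hi) (tc2 e1) ->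
    smooth2 (dom lo hi) (tc1 e2) -> smooth2 (dom lo hi) (tc2 e2) ->
    forall s t : R, dom lo hi s t ->
      vdot (tanf (cyl g w) e1 s t) (tanf (cyl g w) e1 s t) = 1 ->
      vdot (tanf (cyl g w) e2 s t) (tanf (cyl g w) e2 s t) = 1 ->
      vdot (tanf (cyl g w) e1 s t) (tanf (cyl g w) e2 s t) = 0 ->
      sect_expr (cyl g w) C e1 e2 s t = / 2.
Proof.
  intros e1 e2 S1 S2 S3 S4 s t Hd H1 H2 H3.
  exact (sect_main C lo hi g w HC Hw Hg_smooth Hg_reg Hg_plane e1 e2 s t
           (conj S1 S2) (conj S3 S4) Hd H1 H2 H3).
Qed.
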